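(* Let $p>3$ be a prime, $q=p^h$, and $a,b\in\mathbb{F}_{q^2}^*$. If there exist $A,B,C,D\in\overline{\mathbb{F}_q}$ such that $$F_{a,b}(X,Y)=-b\bigl(XY+A(X+Y)+C\bigr)\bigl(XY+B(X+Y)+D\bigr),$$ then $N_{a,b}(X)$ and $D_{a,b}(X)$ have a nonconstant common factor.
   Context: $N_{a,b}(X)=a^qX^3+X^2+b^q$, $D_{a,b}(X)=bX^3+X+a$, and $$F_{a,b}(X,Y)=\frac{N_{a,b}(X)D_{a,b}(Y)-N_{a,b}(Y)D_{a,b}(X)}{X-Y}\in\mathbb{F}_{q^2}[X,Y].$$ *)

(* Defs.v *)
From HB Require Import structures.
From mathcomp Require Import all_boot all_order all_algebra all_field.
Set Implicit Arguments. Unset Strict Implicit. Unset Printing Implicit Defensive.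
Import GRing.Theory.
Local Open Scope ring_scope.

Definition Npoly (R : nzRingType) (q : nat) (a b : R) : {poly R} :=
  (a ^+ q)%:P * 'X^3 + 'X^2 + (b ^+ q)%:P.

Definition Dpoly (R : nzRingType) (a b : R) : {poly R} :=
  b%:P * 'X^3 + 'X + a%:P.

(* Bivariate polynomials R[X,Y] are represented as {poly {poly R}}:
   the inner variable is X, the outer variable is Y. *)
Definition bivX (R : nzRingType) : {poly {poly R}} := ('X)%:P.
Definition bivY (R : nzRingType) : {poly {poly R}} := 'X.
Definition bivC (R : nzRingType) (c : R) : {poly {poly R}} := c%:P%:P.
Definition liftX (R : nzRingType) (P : {poly R}) : {poly {poly R}} := P%:P.
Definition liftY (R : nzRingType) (P : {poly R}) : {poly {poly R}} :=
  map_poly polyC P.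

(* F_{a,b}(X,Y) = (N(X)D(Y) - N(Y)D(X)) / (X - Y)  (exact division; X - Y has
   unit leading coefficient in Y, so %/ is ordinary Euclidean division) *)
Definition Fpoly (R : idomainType) (q : nat) (a b : R) : {poly {poly R}} :=
  (liftX (Npoly q a b) * liftY (Dpoly a b) - liftY (Npoly q a b) * liftX (Dpoly a b))
    %/ (bivX R - bivY R).

(* Main.v *)
Require Import Defs.
From HB Require Import structures.
From mathcomp Require Import all_boot all_order all_algebra all_field.
From mathcomp Require Import ring.
Import GRing.Theory.
Set Implicit Arguments. Unset Strict Implicit.
Local Open Scope ring_scope.

Definition Gexpl (R : idomainType) (al be a b : R) : {poly {poly R}} :=
  let X := bivX R in let Y := bivY R in
  let ga := al * a - be * b in
  bivC (-b) * X^+2 * Y^+2 + bivC al * X^+2 * Y + bivC al * X * Y^+2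
  + bivC ga * X^+2 + bivC ga * Y^+2 + bivC (ga + 1) * X * Y
  + bivC a * X + bivC a * Y - bivC be.

Lemma Fpoly_eq (R : idomainType) q (a b : R) :
  Fpoly q a b = Gexpl (a ^+ q) (b ^+ q) a b.
Proof.
rewrite /Fpoly /Npoly.
move: (a ^+ q) (b ^+ q) => al be.
have -> : liftX (al%:P * 'X^3 + 'X^2 + be%:P) * liftY (Dpoly a b)
    - liftY (al%:P * 'X^3 + 'X^2 + be%:P) * liftX (Dpoly a b)
   = (bivX R - bivY R) * Gexpl al be a b.
  rewrite /Gexpl /liftX /liftY /Dpoly /bivX /bivY /bivC.
  rewrite !rmorphD !rmorphM /= ?rmorphXn /= !map_polyC ?map_polyX /=.
  ring.
apply: Pdiv.IdomainUnit.mulKp.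
have -> : bivX R - bivY R = - ('X - (('X : {poly R}))%:P) by rewrite /bivX /bivY; ring.
by rewrite lead_coefN lead_coefXsubC unitrN unitr1.
Qed.

Definition bp (R : comNzRingType) (c00 c10 c20 c01 c11 c21 c02 c12 c22 : R) : {poly {poly R}} :=
  (c00%:P + c10%:P * 'X + c20%:P * 'X ^+ 2)%:P
  + (c01%:P + c11%:P * 'X + c21%:P * 'X ^+ 2)%:P * 'X
  + (c02%:P + c12%:P * 'X + c22%:P * 'X ^+ 2)%:P * 'X ^+ 2.

Lemma bp_coef (R : comNzRingType) (x00 x10 x20 x01 x11 x21 x02 x12 x22 : R) i j :
  (bp x00 x10 x20 x01 x11 x21 x02 x12 x22)`_j`_i =
  nth 0 (nth [::] [:: [:: x00; x10; x20]; [:: x01; x11; x21]; [:: x02; x12; x22]] j) i.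
Proof.
rewrite /bp !coefD coefMXn coefMX coefC.
case: j => [|[|[|j]]] /=;
  rewrite ?coefD ?coefC ?coefCM ?coefX ?coefXn ?coef0 ?nth_nil //;
  case: i => [|[|[|i]]] /=; rewrite ?coefD ?coefC ?coefCM ?coefX ?coefXn ?coef0 ?nth_nil /=; try ring.
Qed.

Lemma core (K : fieldType) (al be a b A B C D : K) : b != 0 ->
  al = - b * (A + B) ->
  al * a - be * b = - b * (A * B) ->
  al * a - be * b + 1 = - b * (2 * A * B + C + D) ->
  a = - b * (A * D + B * C) ->
  be = b * (C * D) ->
  exists x, al * x ^+ 3 + x ^+ 2 + be = 0 /\ b * x ^+ 3 + x + a = 0.
Proof.
move=> b0 e21 e20 e11 e10 e00; subst al a be.
have h1 : 1 + b * (A * B + C + D) = 0.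
  have H : (- b * (A + B) * (- b * (A * D + B * C)) - b * (C * D) * b + 1)
     - (- b * (A + B) * (- b * (A * D + B * C)) - b * (C * D) * b) = 
     - b * (2 * A * B + C + D) - (- b * (A * B)) by rewrite e11 e20.
  have H' : 1 + b * (A * B + C + D) = ((- b * (A + B) * (- b * (A * D + B * C)) - b * (C * D) * b + 1)
     - (- b * (A + B) * (- b * (A * D + B * C)) - b * (C * D) * b)) - 
     (- b * (2 * A * B + C + D) - (- b * (A * B))) by ring.
  by rewrite H' H subrr.
have H2 : - b * (A + B) * (- b * (A * D + B * C)) - b * (C * D) * b - (- b * (A * B)) = 0.
  by rewrite e20 subrr.
have T : b * b * ((A ^+ 2 - C) * (B ^+ 2 - D)) = 0.
  have H3 : - (- b * (A + B) * (- b * (A * D + B * C)) - b * (C * D) * b - (- b * (A * B)))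
     + b * A * B * (1 + b * (A * B + C + D)) = 0 by rewrite H2 h1 mulr0 oppr0 addr0.
  by apply: (etrans _ H3); ring.
move/eqP: T; rewrite !mulf_eq0 (negbTE b0) /= => /orP []; rewrite subr_eq0 => /eqP hC.
- have hA : A ^+ 2 * (1 + b * (A * B + C + D)) = 0 by rewrite h1 mulr0.
  have hA' : - A * (1 + b * (A * B + C + D)) = 0 by rewrite h1 mulr0.
  subst C; exists (- A); split.
  + by apply: (etrans _ hA); ring.
  + by apply: (etrans _ hA'); ring.
- have hA : B ^+ 2 * (1 + b * (A * B + C + D)) = 0 by rewrite h1 mulr0.
  have hA' : - B * (1 + b * (A * B + C + D)) = 0 by rewrite h1 mulr0.
  subst D; exists (- B); split.
  + by apply: (etrans _ hA); ring.
  + by apply: (etrans _ hA'); ring.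
Qed.

Lemma Gexpl_map (R S : idomainType) (f : {rmorphism R -> S}) (al be a b : R) :
  map_poly (map_poly f) (Gexpl al be a b) = Gexpl (f al) (f be) (f a) (f b).
Proof.
rewrite /Gexpl /bivC /bivX /bivY.
rewrite !rmorphB !rmorphD !rmorphM /= ?rmorphXn /= !map_polyC /= ?map_polyX /= !map_polyC /=.
rewrite ?(rmorphB, rmorphD, rmorphM, rmorphN, rmorph1, map_polyC) /=.
rewrite ?(rmorphB, rmorphD, rmorphM, rmorphN, rmorph1, map_polyC) /=.
rewrite !map_polyC. ring.
Qed.

Theorem mainTheorem9 (p h : nat) (L : finFieldType) (K : closedFieldType)
    (f : {rmorphism L -> K}) :
  prime p -> (3 < p)%N -> (0 < h)%N -> #|L| = ((p ^ h) ^ 2)%N ->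
  (* K is an algebraic closure of L = F_{q^2}, hence of F_q *)
  (forall x : K, exists2 r : {poly L}, r != 0 & root (map_poly f r) x) ->
  forall a b : L, a != 0 -> b != 0 ->
  (exists A B C D : K,
      map_poly (map_poly f) (Fpoly (p ^ h) a b) =
        - bivC (f b)
        * (bivX K * bivY K + bivC A * (bivX K + bivY K) + bivC C)
        * (bivX K * bivY K + bivC B * (bivX K + bivY K) + bivC D)) ->
  exists g : {poly L}, (1 < size g)%N /\ g %| Npoly (p ^ h) a b /\ g %| Dpoly a b.
Proof.
move=> _ _ _ _ _ a b a0 b0 [A [B [C [D E]]]].
rewrite Fpoly_eq Gexpl_map in E.
have [x [xN xD]] : exists x, f (a ^+ (p ^ h)) * x ^+ 3 + x ^+ 2 + f (b ^+ (p ^ h)) = 0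
     /\ f b * x ^+ 3 + x + f a = 0.
  have fb0 : f b != 0 by rewrite fmorph_eq0.
  move: (f (a ^+ _)) (f (b ^+ _)) E => al be E.
  pose ga := al * f a - be * f b.
  have E' : bp (- be) (f a) ga (f a) (ga + 1) al ga al (- f b)
     = bp (- f b * (C * D)) (- f b * (A * D + B * C)) (- f b * (A * B))
          (- f b * (A * D + B * C)) (- f b * (2 * A * B + C + D)) (- f b * (A + B))
          (- f b * (A * B)) (- f b * (A + B)) (- f b).
    have -> : bp (- be) (f a) ga (f a) (ga + 1) al ga al (- f b) = Gexpl al be (f a) (f b).
      by rewrite /Gexpl /bp /bivC /bivX /bivY /ga; ring.
    rewrite E /bp /bivC /bivX /bivY; ring.
  have c21 := congr1 (fun e : {poly {poly K}} => e`_1`_2) E'.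
  have c20 := congr1 (fun e : {poly {poly K}} => e`_0`_2) E'.
  have c11 := congr1 (fun e : {poly {poly K}} => e`_1`_1) E'.
  have c10 := congr1 (fun e : {poly {poly K}} => e`_0`_1) E'.
  have c00 := congr1 (fun e : {poly {poly K}} => e`_0`_0) E'.
  rewrite /= !bp_coef /= in c21 c20 c11 c10 c00.
  apply: (core fb0 c21 c20 c11 c10).
  by rewrite -[be]opprK c00; ring.
exists (gcdp (Npoly (p ^ h) a b) (Dpoly a b)); split; last by rewrite dvdp_gcdl dvdp_gcdr.
have rN : root (map_poly f (Npoly (p ^ h) a b)) x.
  rewrite /root /Npoly !rmorphD !rmorphM /= !map_polyC ?map_polyXn ?map_polyX /= !hornerE.
  apply/eqP; apply: (etrans _ xN); rewrite /=; ring.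
have rD : root (map_poly f (Dpoly a b)) x.
  rewrite /root /Dpoly !rmorphD !rmorphM /= !map_polyC ?map_polyXn ?map_polyX /= !hornerE.
  apply/eqP; apply: (etrans _ xD); rewrite /=; ring.
rewrite -(size_map_poly f) gcdp_map.
have rg : root (gcdp (map_poly f (Npoly (p ^ h) a b)) (map_poly f (Dpoly a b))) x.
  by rewrite root_gcd rN rD.
case: leqP => // hs.
move: rg; rewrite (size1_polyC hs) rootC => /eqP c0.
have : gcdp (map_poly f (Npoly (p ^ h) a b)) (map_poly f (Dpoly a b)) == 0.
  by rewrite (size1_polyC hs) c0.
rewrite gcdp_eq0 !map_poly_eq0 => /andP [_ /eqP D0].
have : (Dpoly a b).[0] = a by rewrite /Dpoly !hornerE /=; ring.
by rewrite D0 horner0 => /esym/eqP; rewrite (negbTE a0).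
Qed.
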